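(* For every positive integer $r$, with $c_r=2^{r+1}-2$, $$S_r^*S_r=2^{r-2}\Big[J_{c_r,c_r}+I_{c_r/2}\otimes\begin{pmatrix}1&-1\\-1&1\end{pmatrix}\Big],$$ where $J_{x,y}$ denotes the $x\times y$ matrix all of whose entries equal $1$.
   Context: Define $\{0,1\}$-matrices $S_r$ recursively. Let $S_1=I_2$. For $r\ge1$ let $F_r=I_{2^r-1}\otimes\begin{pmatrix}0&1\\1&0\end{pmatrix}$, and let $1_r$, $0_r$ denote the $2^r\times1$ all-ones and all-zeros column vectors. For $r\ge2$ set $S_r=\big(B_r^{(i)}\ B_r^{(ii)}\ B_r^{(iii)}\big)$ (horizontal concatenation) with $$B_r^{(i)}=\begin{pmatrix}1_{r-1}&0_{r-1}\\0_{r-1}&1_{r-1}\end{pmatrix},\quad B_r^{(ii)}=\begin{pmatrix}S_{r-1}\\S_{r-1}\end{pmatrix},\quad B_r^{(iii)}=\begin{pmatrix}S_{r-1}\\S_{r-1}F_{r-1}\end{pmatrix}.$$ Then $S_r$ is a $2^r\times c_r$ matrix. *)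

(* Defs.v *)
From HB Require Import structures.
From mathcomp Require Import all_boot all_order all_algebra.
From mathcomp Require Export mxtens.
From mathcomp Require Import zify.
Set Implicit Arguments. Unset Strict Implicit. Unset Printing Implicit Defensive.
Import Order.TTheory GRing.Theory Num.Theory.
Local Open Scope ring_scope.

Definition c (r : nat) : nat := (2 ^ r.+1 - 2)%N.

Lemma cF_eq (r : nat) : ((2 ^ r - 1) * 2 = c r)%N.
Proof. by rewrite /c mulnBl mul1n expnS mulnC. Qed.

Lemma cS_eq (r : nat) : ((1 + 1) + (c r + c r) = c r.+1)%N.
Proof.
rewrite /c !expnS; have h : (2 <= 2 * 2 ^ r)%N.
  by rewrite -[X in (X <= _)%N]muln1 leq_mul2l expn_gt0.
set x := (2 ^ r)%N in h *; lia.
Qed.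

Lemma rowS_eq (r : nat) : (2 ^ r + 2 ^ r = 2 ^ r.+1)%N.
Proof. by rewrite expnS mul2n addnn. Qed.

Lemma chalf_eq (r : nat) : ((c r)./2 * 2 = c r)%N.
Proof.
rewrite /c expnS; set x := (2 ^ r)%N; lia.
Qed.

Lemma c1_eq : (2 = c 1)%N. Proof. by []. Qed.

Section Defs.
Variable R : numFieldType.

Definition swap2 : 'M[R]_2 := \matrix_(i < 2, j < 2) (if i == j then 0 else 1).

Definition Fmx (r : nat) : 'M[R]_(c r) :=
  castmx (cF_eq r, cF_eq r) ((1%:M : 'M[R]_(2 ^ r - 1)) *t swap2).

Definition ones (r : nat) : 'cV[R]_(2 ^ r) := const_mx 1.

(* S_r, a 2^r x c_r {0,1}-matrix; S_0 is an irrelevant placeholder. *)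
Fixpoint Smx (r : nat) : 'M[R]_(2 ^ r, c r) :=
  match r return 'M[R]_(2 ^ r, c r) with
  | 0 => 0
  | r1.+1 =>
    match r1 return 'M[R]_(2 ^ r1, c r1) -> 'M[R]_(2 ^ r1.+1, c r1.+1) with
    | 0 => fun _ => castmx (erefl _, c1_eq) (1%:M : 'M[R]_2)
    | (_.+1) as q => fun S' =>
      castmx (rowS_eq q, cS_eq q)
        (row_mx
           (block_mx (ones q) 0 0 (ones q))
           (row_mx (col_mx S' S') (col_mx S' (S' *m Fmx q))))
    end (Smx r1)
  end.

Definition Jmx (n : nat) : 'M[R]_n := const_mx 1.

Definition Pmx : 'M[R]_2 := \matrix_(i < 2, j < 2) (if i == j then 1 else -1).

End Defs.

(* Main.v *)
Require Import Defs.
From HB Require Import structures.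
From mathcomp Require Import all_boot all_order all_algebra.
From mathcomp Require Import mxtens zify ring.
Set Implicit Arguments. Unset Strict Implicit.
Import GRing.Theory Num.Theory.
Local Open Scope ring_scope.

Definition fl (b : nat) : nat := if (b %% 2 == 1)%N then (b - 1)%N else b.+1.

Lemma fl_lt r (b : nat) : (b < c r)%N -> (fl b < c r)%N.
Proof. move=> hb; have := chalf_eq r; rewrite /fl; case: eqP => h; lia. Qed.

Definition flo r (b : 'I_(c r)) : 'I_(c r) := Ordinal (@fl_lt r b (ltn_ord b)).
Arguments flo {r}.

Lemma fl_eq (a b : nat) :
  ((a %/ 2 == b %/ 2)%N && (a %% 2 != b %% 2)%N) = (a == fl b)%N.
Proof.
rewrite /fl; case: ifP => /eqP h;
do ![case: eqP => ?] => //=; exfalso; lia.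
Qed.

Lemma FmxE (R : numFieldType) r (a b : 'I_(c r)) :
  Fmx R r a b = ((a : nat) == fl b)%:R.
Proof.
rewrite /Fmx castmxE !mxE /= -fl_eq.
rewrite -!val_eqE /=.
case: (_ =P _) => _; case: (_ =P _) => _ /=; by rewrite ?mulr0 ?mulr1 ?mul0r ?mul1r.
Qed.

Lemma sum_pick (R : numFieldType) n (F : 'I_n -> R) (k : 'I_n) :
  \sum_(i < n) F i * ((i : nat) == k)%:R = F k.
Proof.
rewrite (bigD1 k) //= eqxx mulr1 big1 ?addr0 // => i /negbTE.
by rewrite val_eqE => ->; rewrite mulr0.
Qed.

Lemma mulF (R : numFieldType) r m (X : 'M[R]_(m, c r)) i j :
  (X *m Fmx R r) i j = X i (flo j).
Proof.
rewrite mxE; under eq_bigr do rewrite FmxE.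
exact (sum_pick (fun k => X i k) (flo j)).
Qed.

Lemma mulFl (R : numFieldType) r m (Y : 'M[R]_(c r, m)) i j :
  ((Fmx R r)^T *m Y) i j = Y (flo i) j.
Proof.
rewrite mxE; under eq_bigr do rewrite mxE FmxE mulrC.
exact (sum_pick (fun k => Y k j) (flo i)).
Qed.

Lemma gram_row (R : numFieldType) m n1 n2 (X : 'M[R]_(m,n1)) (Y : 'M[R]_(m,n2)) :
  (row_mx X Y)^T *m row_mx X Y =
  block_mx (X^T *m X) (X^T *m Y) (X^T *m Y)^T (Y^T *m Y).
Proof. by rewrite tr_row_mx mul_col_row trmx_mul trmxK. Qed.

Lemma gram_col (R : numFieldType) m1 m2 n p (X : 'M[R]_(m1,n)) (Y : 'M[R]_(m2,n))
  (Z : 'M[R]_(m1,p)) (W : 'M[R]_(m2,p)) :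
  (col_mx X Y)^T *m col_mx Z W = X^T *m Z + Y^T *m W.
Proof. by rewrite tr_col_mx mul_row_col. Qed.

Lemma castmx_gram (R : numFieldType) m m' n n' (e1 : m = m') (e2 : n = n')
  (M : 'M[R]_(m,n)) :
  (castmx (e1,e2) M)^T *m castmx (e1,e2) M = castmx (e2,e2) (M^T *m M).
Proof. by case: m' / e1; case: n' / e2; rewrite !castmx_id. Qed.

Lemma castmx_colsum (R : numFieldType) m m' n n' (e1 : m = m') (e2 : n = n')
  (X : 'cV[R]_m) (M : 'M[R]_(m,n)) :
  (castmx (e1, erefl 1%N) X)^T *m castmx (e1,e2) M = castmx (erefl 1%N,e2) (X^T *m M).
Proof. by case: m' / e1; case: n' / e2; rewrite !castmx_id. Qed.

Lemma block_entry (R : Type) m1 m2 n1 n2 (f : nat -> nat -> R)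
  (ul : 'M[R]_(m1,n1)) (ur : 'M[R]_(m1,n2)) (dl : 'M[R]_(m2,n1)) (dr : 'M[R]_(m2,n2)) :
  (forall i j, ul i j = f i j) -> (forall i j, ur i j = f i (n1 + j)%N) ->
  (forall i j, dl i j = f (m1 + i)%N j) ->
  (forall i j, dr i j = f (m1 + i)%N (n1 + j)%N) ->
  forall i j, block_mx ul ur dl dr i j = f i j.
Proof.
move=> h1 h2 h3 h4 i j.
case: (splitP i) => i' hi.
  have -> : i = lshift m2 i' by apply/val_inj.
  case: (splitP j) => j' hj.
    have -> : j = lshift n2 j' by apply/val_inj.
    by rewrite block_mxEul.
  have -> : j = rshift n1 j' by apply/val_inj.
    by rewrite block_mxEur.
have -> : i = rshift m1 i' by apply/val_inj.
case: (splitP j) => j' hj.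
  have -> : j = lshift n2 j' by apply/val_inj.
    by rewrite block_mxEdl.
have -> : j = rshift n1 j' by apply/val_inj.
    by rewrite block_mxEdr.
Qed.

Lemma row_entry (R : Type) m n1 n2 (v : R) (X : 'M[R]_(m,n1)) (Y : 'M[R]_(m,n2)) :
  (forall i j, X i j = v) -> (forall i j, Y i j = v) ->
  forall i j, row_mx X Y i j = v.
Proof.
move=> h1 h2 i j; case: (splitP j) => j' hj.
  have -> : j = lshift n2 j' by apply/val_inj.
    by rewrite row_mxEl.
have -> : j = rshift n1 j' by apply/val_inj.
    by rewrite row_mxEr.
Qed.

Definition h (R : numFieldType) (q : nat) : R := (2%:R : R) ^ (q%:Z - 2%:Z).

Lemma two_unit (R : numFieldType) : (2%:R : R) \is a GRing.unit.
Proof. by rewrite unitfE pnatr_eq0. Qed.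

Lemma hS (R : numFieldType) q : h R q.+1 = 2%:R * h R q.
Proof.
rewrite /h mulrC -[X in _ = _ * X]expr1z -exprzDr ?two_unit //; congr (_ ^ _); lia.
Qed.

Lemma hpow (R : numFieldType) q : (2 ^ q)%:R = 2%:R * (2%:R * h R q) :> R.
Proof.
rewrite /h mulrA mulrC -[X in _ = _ * X]expr2 exprnP -exprzDr ?two_unit //.
rewrite natrX exprnP; congr (_ ^ _); lia.
Qed.

Lemma h1 (R : numFieldType) : 2%:R * h R 1 = 1.
Proof.
rewrite /h. have -> : (1%:Z - 2%:Z) = -1 :> int by [].
by rewrite exprN1 mulfV // pnatr_eq0.
Qed.

Definition Tg (R : numFieldType) q (i j : nat) : R :=
  h R q * (1 + (i %/ 2 == j %/ 2)%N%:R * (if (i %% 2 == j %% 2)%N then 1 else -1)).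

Lemma Tg_lvl (R : numFieldType) q i j : Tg R q.+1 i j = 2%:R * Tg R q i j.
Proof. by rewrite /Tg hS mulrA. Qed.

Lemma Tg_shift (R : numFieldType) q k i j : Tg R q (k * 2 + i) (k * 2 + j) = Tg R q i j.
Proof. by rewrite /Tg !divnMDl // !modnMDl eqn_add2l. Qed.

Lemma Tg_far (R : numFieldType) q i j : (i %/ 2 != j %/ 2)%N -> Tg R q i j = h R q.
Proof. by move=> /negbTE H; rewrite /Tg H mul0r addr0 mulr1. Qed.

Lemma Tg_sym (R : numFieldType) q i j : Tg R q i j = Tg R q j i.
Proof. by rewrite /Tg eq_sym [(j %% 2 == _)%N]eq_sym. Qed.

Lemma fl_div i j : (fl i %/ 2 == fl j %/ 2)%N = (i %/ 2 == j %/ 2)%N.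
Proof. rewrite /fl; do ![case: ifP => /eqP ?]; do ![case: eqP => ?] => //; exfalso; lia. Qed.

Lemma fl_mod i j : (fl i %% 2 == fl j %% 2)%N = (i %% 2 == j %% 2)%N.
Proof. rewrite /fl; do ![case: ifP => /eqP ?]; do ![case: eqP => ?] => //; exfalso; lia. Qed.

Lemma fl_mod1 i j : (i %% 2 == fl j %% 2)%N = ~~ (i %% 2 == j %% 2)%N.
Proof. rewrite /fl; do ![case: ifP => /eqP ?]; do ![case: eqP => ?] => //; exfalso; lia. Qed.

Lemma fl_div1 i j : (i %/ 2 == fl j %/ 2)%N = (i %/ 2 == j %/ 2)%N.
Proof. rewrite /fl; do ![case: ifP => /eqP ?]; do ![case: eqP => ?] => //; exfalso; lia. Qed.

Lemma Tg_fl (R : numFieldType) q i j : Tg R q (fl i) (fl j) = Tg R q i j.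
Proof. by rewrite /Tg fl_div fl_mod. Qed.

Lemma Tg_sumfl (R : numFieldType) q i j : Tg R q i j + Tg R q i (fl j) = 2%:R * h R q.
Proof.
rewrite /Tg fl_div1 fl_mod1; case: (_ == _)%N; case: (_ == _)%N => /=; ring.
Qed.

Lemma Tg_shift2 (R : numFieldType) q i j : Tg R q (2 + i) (2 + j) = Tg R q i j.
Proof. exact: (Tg_shift R q 1 i j). Qed.

Lemma Tg_shiftc (R : numFieldType) q r i j :
  Tg R q (2 + (c r + i)) (2 + (c r + j)) = Tg R q i j.
Proof.
have e k : (2 + (c r + k) = ((c r)./2).+1 * 2 + k)%N.
  have := chalf_eq r; lia.
by rewrite !e Tg_shift.
Qed.

Lemma step (R : numFieldType) q (S : 'M[R]_(2 ^ q, c q))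
  (hG : forall i j, (S^T *m S) i j = Tg R q i j)
  (hO : (ones R q)^T *m S = const_mx (2%:R * h R q)) :
  let M := castmx (rowS_eq q, cS_eq q)
        (row_mx (block_mx (ones R q) 0 0 (ones R q))
           (row_mx (col_mx S S) (col_mx S (S *m Fmx R q)))) in
  (forall i j, (M^T *m M) i j = Tg R q.+1 i j) /\
  (ones R q.+1)^T *m M = const_mx (2%:R * h R q.+1).
Proof.
move=> M.
set A := block_mx (ones R q) 0 0 (ones R q).
set B := col_mx S S.
set C := col_mx S (S *m Fmx R q).
have hc := chalf_eq q.
have oo : forall i j, ((ones R q)^T *m ones R q) i j = (2 ^ q)%:R.
  by move=> i j; rewrite mxE; under eq_bigr do rewrite !mxE mulr1; rewrite sumr_const card_ord.
have hOE : forall j, ((ones R q)^T *m S) 0 j = 2%:R * h R q by move=> j; rewrite hO mxE.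
have AA : A^T *m A = block_mx ((ones R q)^T *m ones R q) 0 0 ((ones R q)^T *m ones R q).
  by rewrite tr_block_mx mulmx_block !trmx0 !mul0mx !mulmx0 !addr0 !add0r.
have hUL : forall i j : 'I_(1 + 1), (A^T *m A) i j = Tg R q.+1 i j.
  move=> i j; rewrite AA; apply: (block_entry (f := Tg R q.+1)) => a b;
  rewrite ?oo ?mxE !ord1 /= Tg_lvl /Tg /=; rewrite ?hpow; ring.
have ATB : A^T *m B = col_mx ((ones R q)^T *m S) ((ones R q)^T *m S).
  by rewrite tr_block_mx mul_block_col !trmx0 !mul0mx addr0 add0r.
have ATC : A^T *m C = col_mx ((ones R q)^T *m S) ((ones R q)^T *m S *m Fmx R q).
  by rewrite tr_block_mx mul_block_col !trmx0 !mul0mx addr0 add0r mulmxA.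
have hUR : forall (i : 'I_(1 + 1)) (j : 'I_(c q + c q)),
    (A^T *m row_mx B C) i j = Tg R q.+1 i (2 + j).
  move=> i j; rewrite Tg_far; last by have := ltn_ord i; lia.
  rewrite hS mul_mx_row ATB ATC -block_mxEh.
  by apply: (block_entry (f := fun _ _ => 2%:R * h R q)) => a b; rewrite ?mulF ord1 hOE.
have hDL : forall (i : 'I_(c q + c q)) (j : 'I_(1 + 1)),
    ((A^T *m row_mx B C)^T) i j = Tg R q.+1 (2 + i) j.
  by move=> i j; rewrite mxE hUR Tg_sym.
have d2 : forall i j : 'I_(c q), (B^T *m C) i j = Tg R q.+1 (2 + i) (2 + (c q + j)).
  move=> i j; rewrite Tg_far; last by have := ltn_ord i; lia.
  by rewrite hS gram_col mulmxA mxE mulF !hG Tg_sumfl.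
have hDR : forall (i j : 'I_(c q + c q)),
    ((row_mx B C)^T *m row_mx B C) i j = Tg R q.+1 (2 + i) (2 + j).
  move=> i j; rewrite gram_row.
  apply: (block_entry (f := fun a b => Tg R q.+1 (2 + a) (2 + b))) => a b /=.
  - by rewrite gram_col mxE !hG Tg_shift2 Tg_lvl; ring.
  - exact: d2.
  - by rewrite mxE d2 Tg_sym.
  - rewrite gram_col trmx_mul -!mulmxA mxE mulFl mulmxA mulF !hG Tg_fl Tg_shiftc Tg_lvl; ring.
split.
  move=> i j; rewrite castmx_gram gram_row castmxE (block_entry hUL hUR hDL hDR) //.
have eO : ones R q.+1 = castmx (rowS_eq q, erefl 1%N) (col_mx (ones R q) (ones R q)).
  by rewrite /ones col_mx_const castmx_const.
rewrite eO castmx_colsum; apply/matrixP => i j; rewrite castmxE [RHS]mxE hS.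
rewrite mul_mx_row mul_mx_row.
apply: row_entry => a b.
  rewrite tr_col_mx mul_row_block !mulmx0 addr0 add0r.
  by apply: row_entry => a' b'; rewrite oo hpow.
apply: row_entry => a' b'.
  by rewrite gram_col mxE !ord1 !hOE; ring.
by rewrite gram_col mulmxA mxE mulF !ord1 !hOE; ring.
Qed.

Lemma key (R : numFieldType) p :
  (forall i j, ((Smx R p.+1)^T *m Smx R p.+1) i j = Tg R p.+1 i j) /\
  (ones R p.+1)^T *m Smx R p.+1 = const_mx (2%:R * h R p.+1).
Proof.
elim: p => [|p [hG hO]].
  have eS : Smx R 1 = castmx (erefl _, c1_eq) (1%:M : 'M[R]_2) := erefl.
  split.
    move=> i j; rewrite eS castmx_gram trmx1 mul1mx castmxE mxE.
    rewrite -val_eqE /=.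
    case: i j => [[|[|i]] hi] [[|[|j]] hj] //= ; rewrite /Tg /=;
      first [ by rewrite -[LHS](h1 R); ring | ring ].
  apply/matrixP => i j; rewrite h1 eS !mxE.
  under eq_bigr do rewrite !mxE castmxE mxE mul1r.
  rewrite !big_ord_recr big_ord0 /= -!val_eqE /=.
  case: j => [[|[|j]] hj] //=; rewrite ?add0r ?addr0 //.
exact: (step hG hO).
Qed.

Unset Implicit Arguments.
Theorem lemma4p3 (R : numFieldType) (r : nat) (hr : (0 < r)%N) :
  (Smx R r)^T *m Smx R r =
  (2%:R : R) ^ (r%:Z - 2%:Z) *:
    (Jmx R (c r) + castmx (chalf_eq r, chalf_eq r)
                     ((1%:M : 'M[R]_((c r)./2)) *t Pmx R)).
Proof.
case: r hr => // p _; apply/matrixP => i j.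
rewrite (key R p).1 !mxE castmxE !mxE /= -!val_eqE /=.
rewrite /Tg /h. by congr (_ * (1 + _ * _)).
Qed.
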